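(* Let $(f_n)_{n\in\mathbb N}$ be a sequence of contractions (i.e. $\mathrm{Lip}(f_n,d)<1$) on a complete metric space $(\mathbb X,d)$ converging uniformly to some function $f:\mathbb X\to\mathbb X$, i.e. $\sup_{x\in\mathbb X}d(f_n(x),f(x))\to0$. Then the set $\{x_n:n\in\mathbb N\}$, where $x_n$ is the fixed point of $f_n$, is bounded.
   Context: $\mathrm{Lip}(f,d)=\sup_{x\ne y}d(f(x),f(y))/d(x,y)$. *)

(* Defs.v *)
From Stdlib Require Export Reals.
Open Scope R_scope.

Definition is_metric {X : Type} (d : X -> X -> R) : Prop :=
  (forall x y, 0 <= d x y) /\
  (forall x y, d x y = 0 <-> x = y) /\
  (forall x y, d x y = d y x) /\
  (forall x y z, d x z <= d x y + d y z).

Definition cauchy_seq {X : Type} (d : X -> X -> R) (u : nat -> X) : Prop :=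
  forall eps, 0 < eps -> exists N, forall m n, (N <= m)%nat -> (N <= n)%nat ->
    d (u m) (u n) < eps.

Definition seq_converges {X : Type} (d : X -> X -> R) (u : nat -> X) (l : X) : Prop :=
  forall eps, 0 < eps -> exists N, forall n, (N <= n)%nat -> d (u n) l < eps.

Definition complete_metric {X : Type} (d : X -> X -> R) : Prop :=
  forall u, cauchy_seq d u -> exists l, seq_converges d u l.

(* Lip(g,d) < 1, i.e. sup_{x<>y} d(g x, g y)/d(x,y) < 1: there is a constant
   L < 1 bounding all the ratios. *)
Definition contraction {X : Type} (d : X -> X -> R) (g : X -> X) : Prop :=
  exists L, 0 <= L < 1 /\ forall x y, d (g x) (g y) <= L * d x y.

Definition unif_converges {X : Type} (d : X -> X -> R) (fs : nat -> X -> X) (f : X -> X) : Prop :=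
  forall eps, 0 < eps -> exists N, forall n, (N <= n)%nat -> forall x, d (fs n x) (f x) <= eps.

Definition bounded_family {X : Type} (d : X -> X -> R) (xs : nat -> X) : Prop :=
  exists M, forall n m, d (xs n) (xs m) <= M.

(* Main.v *)
Require Import Defs.
From Stdlib Require Import Reals Lra Lia.
Open Scope R_scope.

Lemma finite_bound (g : nat -> R) (N : nat) :
  exists B, forall m, (m < N)%nat -> g m <= B.
Proof.
  induction N as [|N [B HB]].
  - exists 0; intros; lia.
  - exists (Rmax B (g N)). intros m Hm.
    destruct (Nat.eq_dec m N) as [->|Hne].
    + apply Rmax_r.
    + eapply Rle_trans; [apply HB; lia | apply Rmax_l].
Qed.

Theorem mainTheorem5 (X : Type) (d : X -> X -> R)
  (hmet : is_metric d) (hcomp : complete_metric d)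
  (fs : nat -> X -> X) (f : X -> X)
  (hcontr : forall n, contraction d (fs n))
  (hunif : unif_converges d fs f)
  (xs : nat -> X) (hfix : forall n, fs n (xs n) = xs n) :
  bounded_family d xs.
Proof.
  destruct hmet as [hpos [hzero [hsym htri]]].
  destruct (hunif 1 Rlt_0_1) as [N HN].
  destruct (hcontr N) as [L [[HL0 HL1] HLip]].
  destruct (finite_bound (fun m => d (xs m) (xs N)) N) as [B HB].
  set (K := 2 / (1 - L)).
  assert (Hall : forall m, d (xs m) (xs N) <= Rmax B K).
  { intro m. destruct (Nat.lt_ge_cases m N) as [Hlt|Hge].
    - eapply Rle_trans; [apply HB; exact Hlt | apply Rmax_l].
    - eapply Rle_trans; [| apply Rmax_r].
      assert (H1 : d (fs m (xs m)) (f (xs m)) <= 1) by (apply HN; lia).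
      assert (H2 : d (fs N (xs m)) (f (xs m)) <= 1) by (apply HN; lia).
      assert (H3 := HLip (xs m) (xs N)).
      rewrite (hfix N) in H3.
      assert (H4 := htri (fs m (xs m)) (f (xs m)) (fs N (xs m))).
      assert (H5 := htri (xs m) (fs N (xs m)) (xs N)).
      rewrite (hfix m) in H4, H1.
      rewrite (hsym (f (xs m)) (fs N (xs m))) in H4.
      assert (Hd : d (xs m) (xs N) * (1 - L) <= 2) by nra.
      unfold K. apply (Rmult_le_reg_r (1 - L)); [lra|].
      unfold Rdiv. rewrite Rmult_assoc, Rinv_l by lra. lra. }
  exists (2 * Rmax B K). intros n m.
  eapply Rle_trans; [apply (htri _ (xs N))|].
  rewrite (hsym (xs N) (xs m)). generalize (Hall n) (Hall m). lra.
Qed.
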